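(* Let $G=(V,E)$ be a connected graph on $n$ vertices with minimum degree $\delta(G)\geq 3$. Then $F(G)\geq \lfloor n/2\rfloor$. Moreover, if $G$ contains a cycle of even length, then $F(G)\geq \lceil n/2\rceil$.
   Context: All graphs are finite and simple. Given a graph $G=(V,E)$ and a set $S\subseteq V$ of filled vertices, the color change rule is: if a filled vertex $v$ has exactly one unfilled neighbor $w$, then $w$ becomes filled. The derived set of $S$ is the set of filled vertices obtained after applying the rule until no further application is possible. $S$ is a zero forcing set if its derived set is $V$; otherwise $S$ is a failed zero forcing set. The failed zero forcing number $F(G)$ is the maximum size of a failed zero forcing set of $G$. *)

(* Defs.v *)
From mathcomp Require Import all_boot.
Set Implicit Arguments. Unset Strict Implicit. Unset Printing Implicit Defensive.

Definition simple_graph (T : finType) (e : rel T) : Prop :=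
  symmetric e /\ irreflexive e.

Definition nbhd (T : finType) (e : rel T) (v : T) : {set T} := [set u | e v u].

(* one (parallel) application of the color change rule to all possible vertices *)
Definition force_step (T : finType) (e : rel T) (S : {set T}) : {set T} :=
  S :|: [set w | [exists v in S, nbhd e v :\: S == [set w]]].

(* derived set: iterate until stabilisation (#|T| rounds suffice) *)
Definition derived_set (T : finType) (e : rel T) (S : {set T}) : {set T} :=
  iter #|T| (force_step e) S.

Definition zero_forcing_set (T : finType) (e : rel T) (S : {set T}) : bool :=
  derived_set e S == [set: T].

Definition failed_zero_forcing_set (T : finType) (e : rel T) (S : {set T}) : bool :=
  ~~ zero_forcing_set e S.

(* F(G): maximum size of a failed zero forcing set (0 if none exists) *)
Definition failed_zf_number (T : finType) (e : rel T) : nat :=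
  \max_(S : {set T} | failed_zero_forcing_set e S) #|S|.

Definition connected_graph (T : finType) (e : rel T) : Prop :=
  forall x y : T, connect e x y.

Definition min_degree_ge (T : finType) (e : rel T) (d : nat) : Prop :=
  forall v : T, d <= #|nbhd e v|.

Definition has_even_cycle (T : finType) (e : rel T) : Prop :=
  exists c : seq T, [/\ uniq c, cycle e c, 3 <= size c & ~~ odd (size c)].

(* Main.v *)
Require Import Defs.
From mathcomp Require Import all_boot.
From mathcomp Require Import zify.
Set Implicit Arguments. Unset Strict Implicit.

Section Aux.
Variables (T : finType) (e : rel T).
Hypothesis esym : symmetric e.
Hypothesis eirr : irreflexive e.

Definition cross (A : {set T}) x y : bool := e x y && ((x \in A) != (y \in A)).
Definition fcut (A : {set T}) : nat := \sum_x \sum_y cross A x y.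
Definition dcr (A : {set T}) v : nat := \sum_y cross A v y.
Definition Rv (A : {set T}) v : nat := \sum_(x | x != v) \sum_(y | y != v) cross A x y.
Definition tog (A : {set T}) v : {set T} := [set x | (x \in A) != (x == v)].

Lemma crossC A x y : cross A x y = cross A y x.
Proof. by rewrite /cross esym eq_sym. Qed.

Lemma crossvv A v : cross A v v = false.
Proof. by rewrite /cross eirr. Qed.

Lemma fsplit A v : fcut A = 2 * dcr A v + Rv A v.
Proof.
rewrite /fcut (bigD1 v) //=.
have -> : \sum_(x | x != v) \sum_y cross A x y =
    \sum_(x | x != v) (cross A x v + \sum_(y | y != v) cross A x y).
  by apply: eq_bigr => x _; rewrite (bigD1 v).
rewrite big_split /= -/(dcr A v).
have -> : \sum_(i | i != v) cross A i v = dcr A v.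
  rewrite /dcr [RHS](bigD1 v) //= crossvv add0n.
  by apply: eq_bigr => x _; rewrite crossC.
by rewrite /Rv addnA mul2n addnn.
Qed.

Lemma Rtog A v : Rv (tog A v) v = Rv A v.
Proof.
apply: eq_bigr => x hx; apply: eq_bigr => y hy.
rewrite /cross !inE (negbTE hx) (negbTE hy).
by case: (x \in A); case: (y \in A).
Qed.

Lemma dtog A v : dcr A v + dcr (tog A v) v = #|nbhd e v|.
Proof.
rewrite /dcr -big_split -sum1_card [RHS]big_mkcond /=.
apply: eq_bigr => y _; rewrite /nbhd /cross !inE eqxx.
case: (eqVneq y v) => [->|hy]; first by rewrite eirr.
by case: (e v y); case: (v \in A); case: (y \in A).
Qed.

Lemma good_failed (S : {set T}) :
  (forall x, x \in S -> 2 <= #|nbhd e x :\: S|) -> S != set0 ->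
  failed_zero_forcing_set e S.
Proof.
move=> H S0.
have fs : force_step e S = S.
  rewrite /force_step; apply/setUidPl/subsetP => w.
  rewrite inE => /existsP [v /andP [vS /eqP Hv]].
  by have := H v vS; rewrite Hv cards1.
rewrite /failed_zero_forcing_set /zero_forcing_set.
have -> : derived_set e S = S.
  rewrite /derived_set; elim: #|T| => //= n ->; exact: fs.
case/set0Pn: S0 => x xS.
have : 0 < #|nbhd e x :\: S| by apply: leq_trans (H x xS).
case/card_gt0P => y; rewrite inE => /andP [yS _].
apply/negP => /eqP ST; move: yS; by rewrite ST inE.
Qed.

End Aux.

Theorem theorem1 (T : finType) (e : rel T) :
  simple_graph e -> connected_graph e -> min_degree_ge e 3 ->
  #|T| ./2 <= failed_zf_number e /\
  (has_even_cycle e -> uphalf #|T| <= failed_zf_number e).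
Proof.
move=> [esym eirr] _ hdeg.
suff H : uphalf #|T| <= failed_zf_number e.
  split=> [|_] //; apply: leq_trans H; rewrite uphalf_half; lia.
case: (@arg_maxnP _ (set0 : {set T}) predT (fcut e) isT) => A _ Amax.
have d2 : forall v, 2 <= dcr e A v.
  move=> v; rewrite leqNgt; apply/negP => hv.
  have := Amax (tog A v) isT.
  rewrite !(fsplit esym eirr _ v) Rtog.
  have := dtog eirr A v; have := hdeg v; lia.
have side : forall (S : {set T}), (S = A \/ S = ~: A) ->
    forall x, x \in S -> 2 <= #|nbhd e x :\: S|.
  move=> S hS x xS; have := d2 x.
  suff -> : dcr e A x = #|nbhd e x :\: S| by [].
  rewrite /dcr -sum1_card [RHS]big_mkcond /=; apply: eq_bigr => y _.
  rewrite !inE /cross.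
  case: hS xS => -> ; rewrite ?inE => xA; rewrite ?xA ?(negbTE xA); by case: (e x y); case: (y \in A).
have cardAC := cardsC A.
have [n0|npos] := eqVneq #|T| 0; first by rewrite n0.
have key : forall S : {set T}, (S = A \/ S = ~: A) -> uphalf #|T| <= #|S| ->
    uphalf #|T| <= failed_zf_number e.
  move=> S hS hc; have S0 : S != set0.
    apply/set0Pn; apply/card_gt0P; move: hc npos; rewrite uphalf_half; lia.
  apply: leq_trans hc _.
  apply: leq_bigmax_cond; apply: good_failed => //; first exact: side.
have hh := odd_double_half #|T|.
case: (leqP #|~: A| #|A|) => h.
  apply: (key A (or_introl erefl)); rewrite uphalf_half; move: hh; rewrite -muln2; lia.
apply: (key (~: A) (or_intror erefl)); rewrite uphalf_half; move: hh; rewrite -muln2; lia.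
Qed.
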